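(* Let $s \geq 3$ and let $\mathcal{C} = \mathcal{C}_0 \cup \mathcal{C}_1 \cup \cdots \cup \mathcal{C}_{s-2}$ be an $(s-1)$-tiling of $Q_n$. Let $C \in \mathcal{C}_\ell$ be a level $\ell$ cube of codimension $d$. Then for each $\rho \in \{1, \ldots, \ell\}$ and each $\ell' \in \{1, \ldots, s-2\}$, the number of cubes $C' \in \mathcal{C}_{\ell'}$ of codimension at most $d$ which are $\rho$-adjacent to $C$ is at most $d_\rho(C)$.
   Context: $Q_n$ is the hypercube on $\{0,1\}^n$. Subcubes are represented by vectors in $\{0,1,*\}^n$; a special cube is one of the form $(a_1,\dots,a_d,*,\dots,* )$, with codimension $d(C)=d$. Two disjoint cubes are adjacent if they contain vertices adjacent in $Q_n$. A tiling of $Q_n$ is a collection of pairwise disjoint special cubes covering $\{0,1\}^n$. An $(s-1)$-tiling is a sequence of tilings $\mathcal{C}_0, \mathcal{C}_1, \ldots, \mathcal{C}_{s-2}$ where $\mathcal{C}_0 = \{Q_n\}$ and, for $\ell \geq 1$, every cube of $\mathcal{C}_\ell$ is contained in some cube of $\mathcal{C}_{\ell-1}$; cubes of $\mathcal{C}_\ell$ are called level $\ell$ cubes. For a level $\ell$ cube $C$ and $0 \le i \le \ell$, let $C^{(i)}$ be the unique level $i$ cube containing $C$ (so $C^{(0)}=Q_n$, $C^{(\ell)}=C$); the $i$-codimension of $C$ is $d_i(C) = d(C^{(i)}) - d(C^{(i-1)})$ for $1 \leq i \leq \ell$, so $d(C)=\sum_{i\le \ell} d_i(C)$. For two adjacent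 cubes $C, C'$ of the $(s-1)$-tiling, their level of adjacency $\rho(C,C')$ is the minimum $i$ such that the level $i$ cubes containing $C$ and $C'$ are distinct; $C$ and $C'$ are called $\rho$-adjacent if $\rho(C,C')=\rho$. *)

(* Defs.v *)
From mathcomp Require Import all_boot.
Set Implicit Arguments. Unset Strict Implicit. Unset Printing Implicit Defensive.

(* Vertices of Q_n : n-tuples of booleans.
   A special cube with prefix a_1..a_d followed by stars is represented by its prefix
   [:: a_1; ...; a_d] : seq bool; its codimension is its size. *)
Definition vertex (n : nat) := (n.-tuple bool)%type.

Definition in_cube n (x : vertex n) (a : seq bool) : bool :=
  take (size a) x == a.

Definition cube_sub n (a b : seq bool) : bool :=
  [forall x : vertex n, in_cube x a ==> in_cube x b].

Definition cube_disjoint n (a b : seq bool) : bool :=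
  [forall x : vertex n, ~~ (in_cube x a && in_cube x b)].

Definition hamming n (x y : vertex n) : nat :=
  \sum_(i < n) (tnth x i != tnth y i).

Definition cube_adj n (a b : seq bool) : bool :=
  cube_disjoint n a b &&
  [exists x : vertex n, exists y : vertex n,
     [&& in_cube x a, in_cube y b & hamming x y == 1]].

Definition is_tiling n (Ts : seq (seq bool)) : Prop :=
  [/\ uniq Ts,
      all (fun a => size a <= n) Ts,
      {in Ts &, forall a b, a != b -> cube_disjoint n a b} &
      forall x : vertex n, has (in_cube x) Ts].

(* an (s-1)-tiling C_0, ..., C_{s-2}, given as T : nat -> seq (seq bool),
   level l being T l (only levels 0..s-2 are relevant) *)
Definition is_multi_tiling n s (T : nat -> seq (seq bool)) : Prop :=
  [/\ T 0 = [:: [::]],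
      (forall l, l <= s - 2 -> is_tiling n (T l)) &
      (forall l, 1 <= l <= s - 2 ->
         {in T l, forall c, has (cube_sub n c) (T l.-1)})].

Definition anc n (T : nat -> seq (seq bool)) (i : nat) (c : seq bool) :=
  head c [seq a <- T i | cube_sub n c a].

(* i-codimension d_i(C) = d(C^{(i)}) - d(C^{(i-1)}) *)
Definition dlev n (T : nat -> seq (seq bool)) (i : nat) (c : seq bool) : nat :=
  size (anc n T i c) - size (anc n T i.-1 c).

Definition rho_adj n (T : nat -> seq (seq bool)) (rho : nat) (c c' : seq bool) : bool :=
  [&& cube_adj n c c',
      anc n T rho c != anc n T rho c' &
      all (fun i => anc n T i c == anc n T i c') (iota 0 rho)].

(* Main.v *)
Require Import Defs.
From mathcomp Require Import all_boot.
From mathcomp Require Import zify.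
Set Implicit Arguments. Unset Strict Implicit.
Section Aux.
Variable n : nat.

Definition ext (w : seq bool) (b : bool) : vertex n := [tuple nth b w i | i < n].

Lemma nth_ext w b i : i < n -> nth false (ext w b) i = nth b w i.
Proof. move=> h; have := tnth_nth false (ext w b) (Ordinal h). by rewrite tnth_mktuple /= => <-. Qed.

Lemma in_cubeP (x : vertex n) a :
  reflect (size a <= n /\ forall i, i < size a -> nth false x i = nth false a i) (in_cube x a).
Proof.
rewrite /in_cube; apply: (iffP eqP).
- move=> H; split.
  + by rewrite -H size_take size_tuple; case: ifP => // /ltnW.
  + by move=> i hi; rewrite -H nth_take.
- case=> hs H; have hsz : size (take (size a) x) = size a by rewrite size_takel // size_tuple.
  apply: (eq_from_nth (x0:=false)) => // i; rewrite hsz => hi.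
  by rewrite nth_take // H.
Qed.

Lemma in_ext w b a : size a <= n -> (forall i, i < size a -> nth b w i = nth false a i) ->
  in_cube (ext w b) a.
Proof.
move=> hs H; apply/in_cubeP; split => // i hi.
by rewrite nth_ext ?H //; apply: leq_trans hs.
Qed.

Lemma in_ext_self a b : size a <= n -> in_cube (ext a b) a.
Proof. by move=> hs; apply: in_ext => // i hi; apply: set_nth_default. Qed.

Lemma cube_sub_prefix c a : size c <= n -> cube_sub n c a ->
  size a <= size c /\ forall i, i < size a -> nth false a i = nth false c i.
Proof.
move=> hc /forallP H.
have /in_cubeP [ha0 H0] := implyP (H (ext c false)) (in_ext_self false hc).
have /in_cubeP [_ H1] := implyP (H (ext c true)) (in_ext_self true hc).
have hac : size a <= size c.
  rewrite leqNgt; apply/negP => hlt.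
  have := H0 _ hlt; have := H1 _ hlt.
  have hcn : size c < n by apply: leq_trans hlt ha0.
  rewrite !nth_ext //.
  by rewrite !(nth_default _ (leqnn (size c))) => <-.
split; first exact: hac. move=> i hi; rewrite -H0 ?nth_ext //; last by apply: leq_trans hi ha0.
Qed.

Lemma prefix_cube_sub c a : size a <= size c ->
  (forall i, i < size a -> nth false a i = nth false c i) -> cube_sub n c a.
Proof.
move=> hac H; apply/forallP => x; apply/implyP => /in_cubeP [hc Hx].
apply/in_cubeP; split; first by apply: leq_trans hc.
by move=> i hi; rewrite H // Hx //; apply: leq_trans hac.
Qed.

Lemma not_disj (x : vertex n) a b : in_cube x a -> in_cube x b -> ~~ cube_disjoint n a b.
Proof. move=> ha hb; apply/forallP => /(_ x); by rewrite ha hb. Qed.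

Lemma disjC a b : cube_disjoint n a b = cube_disjoint n b a.
Proof. by apply/forallP/forallP => H x; rewrite andbC. Qed.

Lemma compat_not_disj a b : size a <= size b -> size b <= n ->
  (forall i, i < size a -> nth false a i = nth false b i) -> ~~ cube_disjoint n a b.
Proof.
move=> hab hb H; apply: (@not_disj (ext b false)); last exact: in_ext_self.
apply: in_ext; first by apply: leq_trans hb.
move=> i hi; rewrite -H //; apply: set_nth_default; exact: leq_trans hi hab.
Qed.

Lemma sub_not_disj c a b : size c <= n -> cube_sub n c a -> cube_sub n c b -> ~~ cube_disjoint n a b.
Proof.
move=> hc /forallP Ha /forallP Hb; have hx := in_ext_self false hc.
exact: (not_disj (implyP (Ha _) hx) (implyP (Hb _) hx)).
Qed.

Lemma tiling_uniq Ts c a b : is_tiling n Ts -> size c <= n -> a \in Ts -> b \in Ts ->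
  cube_sub n c a -> cube_sub n c b -> a = b.
Proof.
case=> _ _ Hd _ hc ha hb sa sb; case: (eqVneq a b) => // /(Hd _ _ ha hb) hd.
by move: (sub_not_disj hc sa sb); rewrite hd.
Qed.

Lemma anc_sub T i c : cube_sub n c (anc n T i c).
Proof.
rewrite /anc; case E: [seq a <- T i | cube_sub n c a] => [|h t] /=.
  by apply/forallP => x; apply/implyP.
have : h \in [seq a <- T i | cube_sub n c a] by rewrite E inE eqxx.
by rewrite mem_filter => /andP[].
Qed.

Lemma anc_cases T i c : anc n T i c = c \/ anc n T i c \in T i.
Proof.
rewrite /anc; case E: [seq a <- T i | cube_sub n c a] => [|h t] /=; first by left.
right; have : h \in [seq a <- T i | cube_sub n c a] by rewrite E inE eqxx.
by rewrite mem_filter => /andP[].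
Qed.

Lemma anc_eq T i c a : is_tiling n (T i) -> size c <= n -> a \in T i -> cube_sub n c a ->
  anc n T i c = a.
Proof.
move=> ht hc ha sa; rewrite /anc.
have hin : a \in [seq a <- T i | cube_sub n c a] by rewrite mem_filter sa ha.
case E: [seq a <- T i | cube_sub n c a] hin => [|h t] //= _.
have : h \in [seq a <- T i | cube_sub n c a] by rewrite E inE eqxx.
rewrite mem_filter => /andP[sh hh].
exact: (tiling_uniq ht hc hh ha sh sa).
Qed.

Lemma hamming1 (x y : vertex n) i k : hamming x y = 1 -> i < n -> k < n ->
  nth false x i != nth false y i -> nth false x k != nth false y k -> i = k.
Proof.
move=> H hi hk di dk; apply/eqP; apply/negPn/negP => ne.
have ne' : Ordinal hk != Ordinal hi by apply: contra ne => /eqP [->].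
move: H; rewrite /hamming (bigD1 (Ordinal hi)) //= (bigD1 (Ordinal hk)) /=; last by rewrite ne'.
by rewrite !(tnth_nth false) /= di dk.
Qed.

End Aux.

Lemma bool_neq_eq (a b c : bool) : a != c -> b != c -> a = b.
Proof. by case: a; case: b; case: c. Qed.

Theorem proposition4p4 (n s : nat) (T : nat -> seq (seq bool))
  (hs : 3 <= s) (hT : is_multi_tiling n s T)
  (l : nat) (hl : l <= s - 2) (C : seq bool) (hC : C \in T l)
  (rho l' : nat) (hrho : 1 <= rho <= l) (hl' : 1 <= l' <= s - 2) :
  count (fun C' => (size C' <= size C) && rho_adj n T rho C C') (T l')
    <= dlev n T rho C.
Proof.
case: hT => hT0 hTt hTn.
have tl : is_tiling n (T l) := hTt _ hl.
have tl' : is_tiling n (T l') by apply: hTt; case/andP: hl'.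
have trho : is_tiling n (T rho) by apply: hTt; case/andP: hrho => _ h; exact: leq_trans h hl.
have hCn : size C <= n by case: tl => _ /allP H _ _; exact: H.
have [hAC HA] := cube_sub_prefix hCn (anc_sub n T rho.-1 C).
have [hBC HB] := cube_sub_prefix hCn (anc_sub n T rho C).
set A := anc n T rho.-1 C in hAC HA *.
set B := anc n T rho C in hBC HB *.
set P := fun C' => (size C' <= size C) && rho_adj n T rho C C'.
pose f := fun C' : seq bool => find (fun i => nth false C i != nth false C' i) (iota 0 (size C')).
have key : forall C', C' \in T l' -> P C' ->
  [/\ size A <= f C' < size B,
      (forall i, i < size C' -> i != f C' -> nth false C i = nth false C' i),
      nth false C (f C') != nth false C' (f C') & f C' < size C'].
  move=> C' hC' /andP [hsz /and3P [hadj hne hall]].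
  have hC'n : size C' <= n by case: tl' => _ /allP H _ _; exact: H.
  move: (hadj) => /andP [hdisj /existsP [x /existsP [y /and3P [hx hy /eqP hxy]]]].
  have hAeq : A = anc n T rho.-1 C'.
    apply/eqP; apply: (allP hall); rewrite mem_iota add0n.
    by case/andP: hrho => h _; apply/andP; split => //; lia.
  have hhas : has (fun i => nth false C i != nth false C' i) (iota 0 (size C')).
    apply/negPn/negP => /hasPn Hn.
    have : ~~ cube_disjoint n C' C.
      apply: compat_not_disj => // i hi.
      by apply/eqP; rewrite eq_sym; apply/negPn; apply: Hn; rewrite mem_iota add0n.
    by rewrite disjC hdisj.
  have hj : f C' < size C' by move: hhas; rewrite has_find size_iota.
  have hjd : nth false C (f C') != nth false C' (f C').
    by have := nth_find 0 hhas; rewrite nth_iota.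
  have hbef : forall i, i < f C' -> nth false C i = nth false C' i.
    move=> i hi; have := before_find 0 hi; rewrite nth_iota ?add0n; last exact: ltn_trans hi hj.
    by move/negbT/negPn/eqP.
  have hjn : f C' < n by apply: leq_trans hj hC'n.
  have hjC : f C' < size C by apply: leq_trans hj hsz.
  move: hx hy => /in_cubeP [_ Hx] /in_cubeP [_ Hy].
  split => //.
  - apply/andP; split.
    + rewrite leqNgt; apply/negP => hlt.
      have [hAC' HA'] := cube_sub_prefix hC'n (anc_sub n T rho.-1 C').
      rewrite -hAeq in HA'.
      by move: hjd; rewrite -HA // -HA' // eqxx.
    + rewrite ltnNge; apply/negP => hle.
      have sub : cube_sub n C' B.
        apply: prefix_cube_sub; first by apply: leq_trans hle (ltnW hj).
        move=> i hi; rewrite HB // hbef //; exact: leq_trans hi hle.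
      case: (anc_cases n T rho C) => hB; rewrite -/B in hB.
      * rewrite hB in sub.
        have := sub_not_disj hC'n sub (@prefix_cube_sub n C' C' (leqnn _) (fun _ _ => erefl)).
        by rewrite hdisj.
      * have := anc_eq trho hC'n hB sub; rewrite -/B => hE.
        by move: hne; rewrite hE -/B eqxx.
  - move=> i hi hij; apply/eqP; apply/negPn/negP => hd.
    have hiC : i < size C by apply: leq_trans hi hsz.
    have hin : i < n by apply: leq_trans hi hC'n.
    have := hamming1 hxy hin hjn; rewrite !Hx // !Hy // => /(_ hd hjd) /eqP.
    by rewrite (negbTE hij).
pose S := [seq C' <- T l' | P C'].
have hS : forall C', C' \in S -> C' \in T l' /\ P C'.
  by move=> C'; rewrite mem_filter => /andP [].
rewrite -size_filter -/S.
have huniqS : uniq S by apply: filter_uniq; case: tl'.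
have hinj : {in S &, injective f}.
  move=> C1 C2 /hS [h1 p1] /hS [h2 p2] hf.
  have [_ e1 d1 j1] := key _ h1 p1.
  have [_ e2 d2 j2] := key _ h2 p2.
  case: (eqVneq C1 C2) => // hne.
  have hd : cube_disjoint n C1 C2 by case: tl' => _ _ H _; exact: H.
  have hC1n : size C1 <= n by case: tl' => _ /allP H _ _; exact: H.
  have hC2n : size C2 <= n by case: tl' => _ /allP H _ _; exact: H.
  have comp : forall i, i < size C1 -> i < size C2 -> nth false C1 i = nth false C2 i.
    move=> i i1 i2; case: (eqVneq i (f C1)) => hi.
    - rewrite hi; apply: (@bool_neq_eq _ _ (nth false C (f C1))); first by rewrite eq_sym.
      by rewrite hf eq_sym.
    - by rewrite -e1 // e2 // -hf.
  case: (leqP (size C1) (size C2)) => hs12.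
  - have := compat_not_disj hs12 hC2n (fun i hi => comp i hi (leq_trans hi hs12)).
    by rewrite hd.
  - have := compat_not_disj (ltnW hs12) hC1n
      (fun i hi => esym (comp i (ltn_trans hi hs12) hi)).
    by rewrite disjC hd.
rewrite -(size_map f) /dlev -/A -/B.
have -> : size B - size A = size (iota (size A) (size B - size A)) by rewrite size_iota.
apply: uniq_leq_size; first by rewrite map_inj_in_uniq.
move=> j /mapP [C' /hS [h1 p1] ->].
have [/andP [ha hb] _ _ _] := key _ h1 p1.
rewrite mem_iota; apply/andP; split => //.
rewrite subnKC //; apply: leq_trans ha (ltnW hb).
Qed.
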